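(* Let $(\Phi,D)$ be a domain-free information algebra whose lattice $D$ has a top element. (1) $(\Phi,D)$ is continuous (resp. compact) if and only if $(\Phi,\le)$ is a continuous lattice (resp. an algebraic lattice). (2) $(\Phi,D)$ is s-continuous if and only if $(\Phi,\le)$ is a complete lattice and for all $\phi\in\Phi$ and $x\in D$, $\phi^{\Rightarrow x}=\vee\{\psi\in\Phi:\psi=\psi^{\Rightarrow x}\ll\phi\}$; and $(\Phi,D)$ is s-compact if and only if $(\Phi,\le)$ is a complete lattice and for all $\phi\in\Phi$ and $x\in D$, $\phi^{\Rightarrow x}=\vee\{\psi\in\Phi_f:\psi=\psi^{\Rightarrow x}\le\phi\}$.
   Context: A domain-free information algebra $(\Phi,D)$ consists of a set $\Phi$, a lattice $D$, a combination $\otimes:\Phi\times\Phi\to\Phi$ and a focusing $\Phi\times D\to\Phi$, $(\psi,x)\mapsto\psi^{\Rightarrow x}$, such that: (1) $\otimes$ is associative and commutative and has a neutral element $e$; (2) $(\psi^{\Rightarrow y})^{\Rightarrow x}=\psi^{\Rightarrow x\wedge y}$; (3) $(\phi^{\Rightarrow x}\otimes\psi)^{\Rightarrow x}=\phi^{\Rightarrow x}\otimes\psi^{\Rightarrow x}$; (4) for every $\psi$ there is $x\in D$ with $\psi^{\Rightarrow x}=\psi$; (5) $\psi\otimes\psi^{\Rightarrow x}=\psi$. $\Phi$ is ordered by $\psi\le\phi$ iff $\psi\otimes\phi=\phi$; suprema are with respect to this order. $a\ll b$ means: for every directed $X$ with $b\le\vee X$ there is $c\in X$ with $a\le c$; $\Phi_f=\{\phi\in\Phi:\phi\ll\phi\}$.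 A complete lattice $L$ is continuous if $a=\vee\{b:b\ll a\}$ for all $a$, and algebraic if $a=\vee\{b:b\ll b\le a\}$ for all $a$. $(\Phi,D)$ is called continuous (resp. s-continuous) if there is $\Gamma\subseteq\Phi$, closed under combination and containing $e$, such that (convergency) every directed $X\subseteq\Gamma$ has a supremum in $\Phi$, and (density) $\phi=\vee\{\psi\in\Gamma:\psi\ll\phi\}$ for all $\phi$ (resp. (strong density) $\phi^{\Rightarrow x}=\vee\{\psi\in\Gamma:\psi=\psi^{\Rightarrow x}\ll\phi\}$ for all $\phi,x$). It is called compact (resp. s-compact) if such a $\Gamma$ additionally satisfies (compactness): for every directed $X\subseteq\Gamma$ and $\phi\in\Gamma$ with $\phi\le\vee X$ there is $\psi\in X$ with $\phi\le\psi$. *)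

(* Defs.v *)
From HB Require Import structures.
From mathcomp Require Import all_boot all_order.
Set Implicit Arguments. Unset Strict Implicit. Unset Printing Implicit Defensive.
Import Order.TTheory.
Local Open Scope order_scope.

Section InfoAlgebra.
Context {disp : Order.disp_t} {D : latticeType disp} {Phi : Type}.
Variables (comb : Phi -> Phi -> Phi) (e : Phi) (foc : Phi -> D -> Phi).

Record info_algebra : Prop := {
  comb_assoc : forall a b c, comb a (comb b c) = comb (comb a b) c;
  comb_comm  : forall a b, comb a b = comb b a;
  comb_neutral : forall a, comb e a = a;
  foc_foc : forall psi x y, foc (foc psi y) x = foc psi (x `&` y);
  foc_comb : forall phi psi x, foc (comb (foc phi x) psi) x = comb (foc phi x) (foc psi x);
  foc_support : forall psi, exists x, foc psi x = psi;
  foc_idem : forall psi x, comb psi (foc psi x) = psi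
}.

Definition ia_le (psi phi : Phi) : Prop := comb psi phi = phi.

Definition is_sup (X : Phi -> Prop) (s : Phi) : Prop :=
  (forall a, X a -> ia_le a s) /\ (forall u, (forall a, X a -> ia_le a u) -> ia_le s u).

Definition directed (X : Phi -> Prop) : Prop :=
  (exists a, X a) /\
  (forall a b, X a -> X b -> exists c, X c /\ ia_le a c /\ ia_le b c).

Definition way_below (a b : Phi) : Prop :=
  forall X s, directed X -> is_sup X s -> ia_le b s -> exists c, X c /\ ia_le a c.

Definition finite_elt (phi : Phi) : Prop := way_below phi phi.

Definition complete_lattice : Prop := forall X : Phi -> Prop, exists s, is_sup X s.

Definition continuous_lattice : Prop :=
  complete_lattice /\ forall a, is_sup (fun b => way_below b a) a.

Definition algebraic_lattice : Prop :=
  complete_lattice /\ forall a, is_sup (fun b => way_below b b /\ ia_le b a) a.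

Definition gamma_ok (G : Phi -> Prop) : Prop :=
  G e /\ (forall a b, G a -> G b -> G (comb a b)).

Definition convergency (G : Phi -> Prop) : Prop :=
  forall X, (forall a, X a -> G a) -> directed X -> exists s, is_sup X s.

Definition density (G : Phi -> Prop) : Prop :=
  forall phi, is_sup (fun psi => G psi /\ way_below psi phi) phi.

Definition strong_density (G : Phi -> Prop) : Prop :=
  forall phi x, is_sup (fun psi => G psi /\ psi = foc psi x /\ way_below psi phi) (foc phi x).

Definition compactness (G : Phi -> Prop) : Prop :=
  forall X s phi, (forall a, X a -> G a) -> directed X -> is_sup X s ->
    G phi -> ia_le phi s -> exists psi, X psi /\ ia_le phi psi.

Definition ia_continuous : Prop :=
  exists G, gamma_ok G /\ convergency G /\ density G.
Definition ia_s_continuous : Prop :=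
  exists G, gamma_ok G /\ convergency G /\ strong_density G.
Definition ia_compact : Prop :=
  exists G, gamma_ok G /\ convergency G /\ density G /\ compactness G.
Definition ia_s_compact : Prop :=
  exists G, gamma_ok G /\ convergency G /\ strong_density G /\ compactness G.

End InfoAlgebra.

(* Main.v *)
Require Import Defs.
From mathcomp Require Import all_boot all_order.
Import Order.TTheory.
Local Open Scope order_scope.

Lemma L_refl {disp} {D : latticeType disp} {Phi} {comb : Phi -> Phi -> Phi} {e} {foc : Phi -> D -> Phi}
  (H : info_algebra comb e foc) a : ia_le comb a a.
Proof.
  destruct (foc_support H a) as [x Hx]. unfold ia_le.
  pose proof (foc_idem H a x) as E. rewrite Hx in E. exact E.
Qed.

Lemma L_trans {disp} {D : latticeType disp} {Phi} {comb : Phi -> Phi -> Phi} {e} {foc : Phi -> D -> Phi}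
  (H : info_algebra comb e foc) {a b c} : ia_le comb a b -> ia_le comb b c -> ia_le comb a c.
Proof.
  unfold ia_le; intros h1 h2. rewrite <- h2, (comb_assoc H), h1. reflexivity.
Qed.

Lemma L_antisym {disp} {D : latticeType disp} {Phi} {comb : Phi -> Phi -> Phi} {e} {foc : Phi -> D -> Phi}
  (H : info_algebra comb e foc) a b : ia_le comb a b -> ia_le comb b a -> a = b.
Proof.
  unfold ia_le; intros h1 h2. rewrite <- h2, (comb_comm H). exact h1.
Qed.

Lemma L_e {disp} {D : latticeType disp} {Phi} {comb : Phi -> Phi -> Phi} {e} {foc : Phi -> D -> Phi}
  (H : info_algebra comb e foc) a : ia_le comb e a.
Proof. exact (comb_neutral H a). Qed.

Lemma L_combl {disp} {D : latticeType disp} {Phi} {comb : Phi -> Phi -> Phi} {e} {foc : Phi -> D -> Phi}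
  (H : info_algebra comb e foc) a b : ia_le comb a (comb a b).
Proof.
  unfold ia_le. rewrite (comb_assoc H). pose proof (L_refl H a) as h. unfold ia_le in h.
  rewrite h. reflexivity.
Qed.

Lemma L_combr {disp} {D : latticeType disp} {Phi} {comb : Phi -> Phi -> Phi} {e} {foc : Phi -> D -> Phi}
  (H : info_algebra comb e foc) a b : ia_le comb b (comb a b).
Proof. rewrite (comb_comm H). exact (L_combl H b a). Qed.

Lemma L_lub {disp} {D : latticeType disp} {Phi} {comb : Phi -> Phi -> Phi} {e} {foc : Phi -> D -> Phi}
  (H : info_algebra comb e foc) {a b c} : ia_le comb a c -> ia_le comb b c -> ia_le comb (comb a b) c.
Proof.
  unfold ia_le; intros h1 h2. rewrite <- (comb_assoc H), h2, h1. reflexivity.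
Qed.

Lemma L_foc {disp} {D : latticeType disp} {Phi} {comb : Phi -> Phi -> Phi} {e} {foc : Phi -> D -> Phi}
  (H : info_algebra comb e foc) a x : ia_le comb (foc a x) a.
Proof. unfold ia_le. rewrite (comb_comm H). exact (foc_idem H a x). Qed.

Lemma L_foc_mono {disp} {D : latticeType disp} {Phi} {comb : Phi -> Phi -> Phi} {e} {foc : Phi -> D -> Phi}
  (H : info_algebra comb e foc) {a b x} : ia_le comb a b -> ia_le comb (foc a x) (foc b x).
Proof.
  intro hab. unfold ia_le. rewrite <- (foc_comb H).
  assert (E : comb (foc a x) b = b) by exact (L_trans H (L_foc H a x) hab).
  rewrite E. reflexivity.
Qed.

Lemma L_foc_top {disp} {D : tLatticeType disp} {Phi} {comb : Phi -> Phi -> Phi} {e} {foc : Phi -> D -> Phi}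
  (H : info_algebra comb e foc) a : foc a \top = a.
Proof.
  destruct (foc_support H a) as [x Hx]. transitivity (foc (foc a x) \top).
  { rewrite Hx. reflexivity. }
  rewrite (foc_foc H) meet1x. exact Hx.
Qed.

Lemma L_wb_le {disp} {D : latticeType disp} {Phi} {comb : Phi -> Phi -> Phi} {e} {foc : Phi -> D -> Phi}
  (H : info_algebra comb e foc) {a b} : way_below comb a b -> ia_le comb a b.
Proof.
  intro w. destruct (w (fun c => c = b) b) as [c [-> hc]]; auto.
  - split; [exists b; reflexivity|]. intros a0 b0 -> ->. exists b. split; [reflexivity|].
    split; apply (L_refl H).
  - split; [intros ? ->; apply (L_refl H)|]. intros u hu. apply hu. reflexivity.
  - apply (L_refl H).
Qed.

Lemma L_wb_mono {disp} {D : latticeType disp} {Phi} {comb : Phi -> Phi -> Phi} {e} {foc : Phi -> D -> Phi}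
  (H : info_algebra comb e foc) {a b b'} : way_below comb a b -> ia_le comb b b' -> way_below comb a b'.
Proof.
  intros w hb X s hX hs hle. apply (w X s hX hs). exact (L_trans H hb hle).
Qed.

Lemma L_fin_wb {disp} {D : latticeType disp} {Phi} {comb : Phi -> Phi -> Phi} {e} {foc : Phi -> D -> Phi}
  (H : info_algebra comb e foc) {a b} : finite_elt comb a -> ia_le comb a b -> way_below comb a b.
Proof.
  intros w hab X s hX hs hle. apply (w X s hX hs). exact (L_trans H hab hle).
Qed.

Lemma L_fin_gamma {disp} {D : latticeType disp} {Phi} {comb : Phi -> Phi -> Phi} {e} {foc : Phi -> D -> Phi}
  (H : info_algebra comb e foc) : gamma_ok comb e (finite_elt comb).
Proof.
  split.
  - intros X s [[c hc] _] _ _. exists c. split; [exact hc|]. apply (L_e H).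
  - intros a b ha hb X s hX hs hle.
    destruct (ha X s hX hs (L_trans H (L_combl H a b) hle)) as [c1 [h1 h1']].
    destruct (hb X s hX hs (L_trans H (L_combr H a b) hle)) as [c2 [h2 h2']].
    destruct (proj2 hX c1 c2 h1 h2) as [c [hc [hc1 hc2]]].
    exists c. split; [exact hc|]. apply (L_lub H); eapply (L_trans H); eauto.
Qed.

Definition weak_dens {Phi} (comb : Phi -> Phi -> Phi) (G : Phi -> Prop) : Prop :=
  forall a u, (forall g, G g -> way_below comb g a -> ia_le comb g u) -> ia_le comb a u.

Lemma L_complete {disp} {D : latticeType disp} {Phi} {comb : Phi -> Phi -> Phi} {e} {foc : Phi -> D -> Phi}
  (H : info_algebra comb e foc) {G} : gamma_ok comb e G -> convergency comb G -> weak_dens comb G ->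
  complete_lattice comb.
Proof.
  intros [Ge Gc] hc wd X.
  set (Y := fun g => G g /\ forall u, (forall a, X a -> ia_le comb a u) -> ia_le comb g u).
  destruct (hc Y) as [s [hs1 hs2]].
  - intros a [h _]; exact h.
  - split.
    + exists e. split; [exact Ge|]. intros; apply (L_e H).
    + intros a b [ha ha'] [hb hb']. exists (comb a b). split; [split|split].
      * apply Gc; auto.
      * intros u hu. apply (L_lub H); auto.
      * apply (L_combl H).
      * apply (L_combr H).
  - exists s. split.
    + intros a ha. apply wd. intros g hg hw. apply hs1. split; [exact hg|].
      intros u hu. exact (L_trans H (L_wb_le H hw) (hu a ha)).
    + intros u hu. apply hs2. intros a [_ ha]. apply ha. exact hu.
Qed.

Lemma L_G_fin {disp} {D : latticeType disp} {Phi} {comb : Phi -> Phi -> Phi} {e} {foc : Phi -> D -> Phi}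
  (H : info_algebra comb e foc) {G} : gamma_ok comb e G -> convergency comb G -> weak_dens comb G ->
  compactness comb G -> forall {g}, G g -> finite_elt comb g.
Proof.
  intros [Ge Gc] hc wd hcp g hg X s hX [hs1 hs2] hle.
  set (Y := fun h => G h /\ exists c, X c /\ ia_le comb h c).
  assert (hYd : directed comb Y).
  { split.
    - destruct (proj1 hX) as [c hcx]. exists e. split; [exact Ge|]. exists c. split; auto. apply (L_e H).
    - intros a b [ha [c1 [h1 h1']]] [hb [c2 [h2 h2']]].
      destruct (proj2 hX c1 c2 h1 h2) as [c [hcx [hc1 hc2]]].
      exists (comb a b). split; [split|split].
      + apply Gc; auto.
      + exists c. split; auto. apply (L_lub H); eapply (L_trans H); eauto.
      + apply (L_combl H).
      + apply (L_combr H). }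
  destruct (hc Y (fun a h => proj1 h) hYd) as [t [ht1 ht2]].
  assert (hst : ia_le comb s t).
  { apply hs2. intros c hcx. apply wd. intros h hh hw. apply ht1. split; auto.
    exists c. split; auto. exact (L_wb_le H hw). }
  destruct (hcp Y t g (fun a h => proj1 h) hYd (conj ht1 ht2) hg (L_trans H hle hst))
    as [h [[_ [c [hcx hhc]]] hgh]].
  exists c. split; auto. eapply (L_trans H); eauto.
Qed.

Lemma L_sup_ext {Phi} (comb : Phi -> Phi -> Phi) (X Y : Phi -> Prop) s :
  (forall a, X a <-> Y a) -> is_sup comb X s -> is_sup comb Y s.
Proof.
  intros hxy [h1 h2]. split.
  - intros a ha. apply h1. apply hxy. exact ha.
  - intros u hu. apply h2. intros a ha. apply hu. apply hxy. exact ha.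
Qed.

Theorem theorem3p8 (disp : Order.disp_t) (D : tLatticeType disp) (Phi : Type)
  (comb : Phi -> Phi -> Phi) (e : Phi) (foc : Phi -> D -> Phi) :
  info_algebra comb e foc ->
  ((ia_continuous comb e <-> continuous_lattice comb) /\
   (ia_compact comb e <-> algebraic_lattice comb)) /\
  ((ia_s_continuous comb e foc <->
      complete_lattice comb /\
      forall (phi : Phi) (x : D),
        is_sup comb (fun psi => psi = foc psi x /\ way_below comb psi phi) (foc phi x)) /\
   (ia_s_compact comb e foc <->
      complete_lattice comb /\
      forall (phi : Phi) (x : D),
        is_sup comb (fun psi => finite_elt comb psi /\ psi = foc psi x /\ ia_le comb psi phi)
          (foc phi x))).
Proof.
  intro H.
  assert (wd_d : forall G, density comb G -> weak_dens comb G).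
  { intros G hd a u hu. apply (proj2 (hd a)). intros g [hg hw]. auto. }
  assert (wd_s : forall G, strong_density comb foc G -> weak_dens comb G).
  { intros G hd a u hu. rewrite <- (L_foc_top H a). apply (proj2 (hd a \top)).
    intros g [hg [_ hw]]. auto. }
  assert (Tok : gamma_ok comb e (fun _ => True)) by (split; auto).
  assert (Tconv : complete_lattice comb -> convergency comb (fun _ => True)).
  { intros hc X _ _. apply hc. }
  assert (Fconv : complete_lattice comb -> convergency comb (finite_elt comb)).
  { intros hc X _ _. apply hc. }
  split; [split|split].
  - split.
    + intros [G [hG [hc hd]]]. split; [exact (L_complete H hG hc (wd_d G hd))|].
      intro a. split.
      * intros b hb. exact (L_wb_le H hb).
      * intros u hu. apply (proj2 (hd a)). intros g [_ hw]. auto.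
    + intros [hc hcont]. exists (fun _ => True). split; [exact Tok|split; [exact (Tconv hc)|]].
      intro a. eapply L_sup_ext; [|exact (hcont a)]. intro; tauto.
  - split.
    + intros [G [hG [hc [hd hcp]]]]. split; [exact (L_complete H hG hc (wd_d G hd))|].
      intro a. split.
      * intros b [_ hb]. exact hb.
      * intros u hu. apply (proj2 (hd a)). intros g [hg hw]. apply hu. split.
        -- exact (L_G_fin H hG hc (wd_d G hd) hcp hg).
        -- exact (L_wb_le H hw).
    + intros [hc halg]. exists (finite_elt comb). split; [exact (L_fin_gamma H)|].
      split; [exact (Fconv hc)|]. split.
      * intro a. split.
        -- intros g [_ hw]. exact (L_wb_le H hw).
        -- intros u hu. apply (proj2 (halg a)). intros b [hb hba]. apply hu. split; auto.
           exact (L_fin_wb H hb hba).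
      * intros X s phi _ hX hs hphi hle. exact (hphi X s hX hs hle).
  - split.
    + intros [G [hG [hc hd]]]. split; [exact (L_complete H hG hc (wd_s G hd))|].
      intros phi x. split.
      * intros psi [hpsi hw]. rewrite hpsi. apply (L_foc_mono H). exact (L_wb_le H hw).
      * intros u hu. apply (proj2 (hd phi x)). intros g [_ [hg hw]]. auto.
    + intros [hc hf]. exists (fun _ => True). split; [exact Tok|split; [exact (Tconv hc)|]].
      intros phi x. eapply L_sup_ext; [|exact (hf phi x)]. intro; tauto.
  - split.
    + intros [G [hG [hc [hd hcp]]]]. split; [exact (L_complete H hG hc (wd_s G hd))|].
      intros phi x. split.
      * intros psi [_ [hpsi hle]]. rewrite hpsi. apply (L_foc_mono H). exact hle.
      * intros u hu. apply (proj2 (hd phi x)). intros g [hg [hgx hw]]. apply hu. split; [|split].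
        -- exact (L_G_fin H hG hc (wd_s G hd) hcp hg).
        -- exact hgx.
        -- exact (L_wb_le H hw).
    + intros [hc hf]. exists (finite_elt comb). split; [exact (L_fin_gamma H)|].
      split; [exact (Fconv hc)|]. split.
      * intros phi x. split.
        -- intros g [_ [hg hw]]. rewrite hg. apply (L_foc_mono H). exact (L_wb_le H hw).
        -- intros u hu. apply (proj2 (hf phi x)). intros b [hb [hbx hba]]. apply hu.
           split; [exact hb|split; [exact hbx|exact (L_fin_wb H hb hba)]].
      * intros X s phi _ hX hs hphi hle. exact (hphi X s hX hs hle).
Qed.
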